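(* In the atomic model under the Shapley scheme with exactly one large player of stake $a$ and all other players of stake $1$, if the total number of players satisfies $n\ge (2h-1)^2+h$, then the Price of Stability is at most $2$.
   Context: Atomic model with threshold $h$: $n$ players, one of stake $a$ and $n-1$ of stake $1$, where $h,a$ are integers with $2\le a\le h-1$. Each player opens her own pool or joins one; pools partition the players; a pool $S$ has reward $\rho(S)=1$ if its total stake is at least $h$ (winning) and $0$ otherwise. Shapley scheme: player $i$ in pool $S$ receives $\phi_i(S)=\sum_{T\subseteq S\setminus\{i\}}\frac{|T|!(|S|-|T|-1)!}{|S|!}(\rho(T\cup\{i\})-\rho(T))$. A partition into winning pools is a Nash equilibrium if no player can strictly increase her payment by moving to another pool of the partition or opening a new pool alone. $OPT(G)$ is the maximum number of pools of stake at least $h$ in a partition of the players; $W(\Pi)$ is the number of winning pools of $\Pi$; the Price of Stability is $\min_\Pi OPT(G)/W(\Pi)$ over Nash equilibrium partitions. *)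

(* Defs.v *)
From mathcomp Require Import all_boot all_order all_algebra.
Set Implicit Arguments. Unset Strict Implicit. Unset Printing Implicit Defensive.
Import Order.TTheory GRing.Theory Num.Theory.

Definition stake (n a : nat) (i : 'I_n) : nat := if val i == 0%N then a else 1%N.

Definition wt (n a : nat) (S : {set 'I_n}) : nat := (\sum_(i in S) stake a i)%N.

Definition rho (n h a : nat) (S : {set 'I_n}) : rat :=
  if (h <= wt a S)%N then 1%R else 0%R.

Definition shapley (n h a : nat) (i : 'I_n) (S : {set 'I_n}) : rat :=
  (\sum_(T : {set 'I_n} | T \subset S :\ i)
     ((#|T|`! * (#|S| - #|T| - 1)`!)%:R / (#|S|`!)%:R)
       * (rho h a (T :|: [set i]) - rho h a T))%R.

Definition W (n h a : nat) (P : {set {set 'I_n}}) : nat :=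
  #|[set S in P | (h <= wt a S)%N]|.

Definition OPT (n h a : nat) : nat :=
  (\max_(P : {set {set 'I_n}} | partition P [set: 'I_n]) W h a P)%N.

Definition NE (n h a : nat) (P : {set {set 'I_n}}) : Prop :=
  [/\ partition P [set: 'I_n],
      (forall S, S \in P -> (h <= wt a S)%N) &
      (forall i S, S \in P -> i \in S ->
         (forall S', S' \in P -> S' != S ->
            (shapley h a i (S' :|: [set i]) <= shapley h a i S)%R)
         /\ (shapley h a i [set i] <= shapley h a i S)%R)].

(* Main.v *)
Require Import Defs.
From mathcomp Require Import all_boot all_order all_algebra.
Import Order.TTheory GRing.Theory Num.Theory.
From mathcomp Require Import zify ring lra.

Section S1.
Local Open Scope ring_scope.

Lemma sum_subsets n (A : {set 'I_n}) (F : nat -> rat) :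
  \sum_(T : {set 'I_n} | T \subset A) F #|T| =
  \sum_(t < #|A|.+1) 'C(#|A|, t)%:R * F t.
Proof.
rewrite (partition_big (fun T : {set 'I_n} => (inord #|T| : 'I_#|A|.+1)) predT) //=.
apply: eq_bigr => t _.
rewrite (eq_bigr (fun _ => F t)); last first.
  move=> T /andP[sTA /eqP <-]; rewrite inordK // ltnS subset_leq_card //.
rewrite sumr_const -cards_draws [RHS]mulr_natl; congr (_ *+ _).
apply: eq_card => T; rewrite !inE; apply: andb_id2l => sTA.
have le : (#|T| < #|A|.+1)%N by rewrite ltnS subset_leq_card.
apply/eqP/eqP => [<-|->]; first by rewrite inordK.
by apply: val_inj; rewrite /= inordK.
Qed.

Lemma sum_subsets_split n (A : {set 'I_n}) z (F : {set 'I_n} -> rat) :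
  z \in A ->
  \sum_(T : {set 'I_n} | T \subset A) F T =
  \sum_(U : {set 'I_n} | U \subset A :\ z) F U +
  \sum_(U : {set 'I_n} | U \subset A :\ z) F (z |: U).
Proof.
move=> zA.
rewrite [LHS](bigID (fun T : {set 'I_n} => z \in T)) /= addrC; congr (_ + _).
  by apply: eq_bigl => T; rewrite subsetD1.
rewrite (reindex_onto (fun U => z |: U) (fun T => T :\ z)); last first.
  by move=> T /andP[_ zT]; rewrite setD1K.
apply: eq_bigl => U.
rewrite setU11 andbT subUset sub1set zA /= subsetD1.
case zU: (z \in U); last by rewrite setU1K ?zU // eqxx.
rewrite andbF; apply/negbTE; apply/andP => -[_ /eqP E].
by move: zU; rewrite -E !inE eqxx.
Qed.

Lemma natS_neq0 (k : nat) : (1 + k%:R : rat) != 0.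
Proof. by rewrite addrC natr1 pnatr_eq0. Qed.
Lemma natSS_neq0 (k : nat) : (2 + k%:R : rat) != 0.
Proof. by rewrite -natrD pnatr_eq0. Qed.
Lemma fact_neq0 (k : nat) : (k`!%:R : rat) != 0.
Proof. by rewrite pnatr_eq0 -lt0n fact_gt0. Qed.

Lemma fact_weight1 m t : (t <= m)%N ->
  ('C(m,t)%:R * ((t`! * (m.+1 - t - 1)`!)%:R / (m.+1`!)%:R) : rat)
   = 1 / m.+1%:R.
Proof.
move=> tm.
have -> : (m.+1 - t - 1 = m - t)%N by lia.
rewrite mulrA -natrM bin_fact // factS natrM.
have h1 : (m`!%:R : rat) != 0 by rewrite pnatr_eq0 -lt0n fact_gt0.
have h2 : (m.+1%:R : rat) != 0 by rewrite pnatr_eq0.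
field; by rewrite ?natS_neq0 ?natSS_neq0 ?fact_neq0.
Qed.

Lemma fact_weight2 m t : (t <= m)%N ->
  ('C(m,t)%:R * ((t`! * (m.+2 - t - 1)`!)%:R / (m.+2`!)%:R) : rat)
   = (m.+1 - t)%:R / (m.+1 * m.+2)%:R.
Proof.
move=> tm.
have -> : (m.+2 - t - 1 = (m - t).+1)%N by lia.
rewrite factS.
have E : ('C(m,t) * (t`! * ((m-t).+1 * (m-t)`!)) = (m-t).+1 * m`!)%N.
  by rewrite [(t`! * _)%N]mulnCA mulnCA bin_fact.
rewrite mulrA -natrM E !factS !natrM.
have -> : ((m - t).+1 = m.+1 - t)%N by lia.
have h1 : (m`!%:R : rat) != 0 by rewrite pnatr_eq0 -lt0n fact_gt0.
have h2 : (m.+1%:R : rat) != 0 by rewrite pnatr_eq0.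
have h3 : (m.+2%:R : rat) != 0 by rewrite pnatr_eq0.
field; by rewrite ?natS_neq0 ?natSS_neq0 ?fact_neq0.
Qed.

Lemma fact_weight3 m t : (t <= m)%N ->
  ('C(m,t)%:R * ((t.+1`! * (m.+2 - t.+1 - 1)`!)%:R / (m.+2`!)%:R) : rat)
   = t.+1%:R / (m.+1 * m.+2)%:R.
Proof.
move=> tm.
have -> : (m.+2 - t.+1 - 1 = (m - t))%N by lia.
rewrite factS.
have E : ('C(m,t) * (t.+1 * t`! * (m-t)`!) = t.+1 * m`!)%N.
  by rewrite -mulnA mulnCA bin_fact.
rewrite mulrA -natrM E !factS !natrM.
have h1 : (m`!%:R : rat) != 0 by rewrite pnatr_eq0 -lt0n fact_gt0.
have h2 : (m.+1%:R : rat) != 0 by rewrite pnatr_eq0.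
have h3 : (m.+2%:R : rat) != 0 by rewrite pnatr_eq0.
field; by rewrite ?natS_neq0 ?natSS_neq0 ?fact_neq0.
Qed.

Lemma wt_small n a (T : {set 'I_n}) :
  (forall j, j \in T -> val j != 0%N) -> wt a T = #|T|.
Proof.
move=> H; rewrite /wt (eq_bigr (fun _ => 1%N)) ?sum1_card //.
by move=> j /H; rewrite /stake => /negbTE ->.
Qed.

Lemma wt_add n a (T : {set 'I_n}) i :
  i \notin T -> wt a (T :|: [set i]) = (wt a T + stake a i)%N.
Proof. by move=> iT; rewrite /wt setUC big_setU1 //= addnC. Qed.

Definition dlt (h w s : nat) : rat :=
  (if (h <= w + s)%N then 1 else 0) - (if (h <= w)%N then 1 else 0).

Lemma shapley_smallA n h a (S : {set 'I_n}) i :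
  i \in S -> (forall j, j \in S :\ i -> val j != 0%N) ->
  shapley h a i S =
  (\sum_(t < #|S :\ i|.+1) dlt h t (stake a i)) / #|S|%:R.
Proof.
move=> iS sm; rewrite /shapley.
have cS : #|S| = #|S :\ i|.+1 by rewrite (cardsD1 i S) iS.

rewrite (eq_bigr (fun T : {set 'I_n} => ((#|T|`! * (#|S| - #|T| - 1)`!)%N%:R / (#|S|`!)%:R)
   * dlt h #|T| (stake a i))); last first.
  move=> T sT; congr (_ * _).
  have sm' : forall j, j \in T -> val j != 0%N.
    by move=> j jT; apply: sm; apply: (subsetP sT).
  have iT : i \notin T by apply/negP => /(subsetP sT); rewrite !inE eqxx.
  by rewrite /rho /dlt wt_add // wt_small.
rewrite (@sum_subsets n (S :\ i) (fun t => ((t`! * (#|S| - t - 1)`!)%N%:R / (#|S|`!)%:R) * dlt h t (stake a i))).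
rewrite cS mulr_suml; apply: eq_bigr => t _.
rewrite mulrA fact_weight1; last by rewrite -ltnS.
by rewrite mul1r mulrC.
Qed.

Lemma sum_dlt1 h m : (0 < h)%N ->
  \sum_(t < m.+1) dlt h t 1 = if (h <= m.+1)%N then 1 else 0.
Proof.
move=> h0.
rewrite -(big_mkord xpredT (fun t => dlt h t 1)).
rewrite (eq_bigr (fun t => (fun w => if (h <= w)%N then (1:rat) else 0) t.+1 -
   (fun w => if (h <= w)%N then (1:rat) else 0) t)); last first.
  by move=> t _; rewrite /dlt addn1.
rewrite telescope_sumr // /=.
have -> : (h <= 0)%N = false by lia.
by rewrite subr0.
Qed.

Lemma sum_dlta h a M : (a <= h)%N ->
  \sum_(t < M) dlt h t a = (minn M h - (h - a))%:R.
Proof.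
move=> ah; elim: M => [|M IH]; first by rewrite big_ord0 min0n.
rewrite big_ord_recr /= IH /dlt.
case: (leqP h M) => hM.
  have -> : (h <= M + a)%N by lia.
  rewrite subrr addr0; congr _%:R; lia.
case: (leqP h (M + a)) => hMa.
  rewrite subr0 natr1; congr _%:R; lia.
rewrite subrr addr0; congr _%:R; lia.
Qed.

Lemma dlt_pt h c t : (c < h)%N ->
  dlt h (t + c) 1 = if t == (h - c - 1)%N then 1 else 0.
Proof.
move=> ch; rewrite /dlt.
case: (leqP h (t + c + 1)) => h1; case: (leqP h (t + c)) => h2;
  case: eqP => e; rewrite ?subrr ?subr0 //; lia.
Qed.

Lemma sum_pt (g : nat -> rat) M j :
  \sum_(t < M) g t * (if t == j :> nat then 1 else 0) = if (j < M)%N then g j else 0.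
Proof.
rewrite -(@big_ord1_eq rat 0 +%R g j M) [RHS]big_mkcond; apply: eq_bigr => t _.
by case: eqP; rewrite ?mulr1 ?mulr0.
Qed.

Definition num (h a k : nat) : nat :=
  ((if (h <= k)%N then k + 1 - h else 0) + (if (h - a <= k)%N then h - a else 0))%N.

Lemma shapley_Lpool n h a (S : {set 'I_n}) (i z : 'I_n) k :
  (a < h)%N -> val z = 0%N -> z \in S -> i \in S -> i != z ->
  (forall j, j \in S -> j != z -> val j != 0%N) -> #|S| = k.+2 ->
  shapley h a i S = (num h a k.+1)%:R / (k.+1 * k.+2)%:R.
Proof.
move=> ah z0 zS iS iz sm cS; rewrite /shapley.
have zA : z \in S :\ i by rewrite !inE eq_sym iz.
have cA' : #|S :\ i :\ z| = k.
  by move: cS; rewrite (cardsD1 i S) iS (cardsD1 z (S :\ i)) zA; case.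
have smA' : forall j, j \in S :\ i :\ z -> val j != 0%N.
  by move=> j; rewrite !inE => /and3P[jz _ jS]; apply: sm.
rewrite (@sum_subsets_split n (S :\ i) z) //.
have stz : stake a z = a by rewrite /stake z0.
have sti : stake a i = 1%N.
  by rewrite /stake (negbTE (sm i iS iz)).
rewrite (eq_bigr (fun U : {set 'I_n} => ((#|U|`! * (k.+2 - #|U| - 1)`!)%N%:R / (k.+2`!)%:R)
   * dlt h (#|U| + 0) 1)); last first.
  move=> U sU; rewrite cS addn0; congr (_ * _).
  have sm' : forall j, j \in U -> val j != 0%N.
    by move=> j jU; apply: smA'; apply: (subsetP sU).
  have iU : i \notin U by apply/negP => /(subsetP sU); rewrite !inE eqxx andbF.
  by rewrite /rho /dlt wt_add // wt_small // sti.
rewrite [X in _ + X](eq_bigr (fun U : {set 'I_n} => ((#|U|.+1`! * (k.+2 - #|U|.+1 - 1)`!)%N%:R / (k.+2`!)%:R)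
   * dlt h (#|U| + a) 1)); last first.
  move=> U sU; rewrite cS.
  have zU : z \notin U by apply/negP => /(subsetP sU); rewrite !inE eqxx.
  have cU : #|z |: U| = #|U|.+1 by rewrite cardsU1 zU.
  rewrite cU; congr (_ * _).
  have sm' : forall j, j \in U -> val j != 0%N.
    by move=> j jU; apply: smA'; apply: (subsetP sU).
  have iU : i \notin z |: U.
    by rewrite !inE negb_or iz /=; apply/negP => /(subsetP sU); rewrite !inE eqxx andbF.
  rewrite /rho /dlt wt_add // sti /wt big_setU1 //= -/(wt a U) wt_small // stz.
  by rewrite [(a + #|U|)%N]addnC.
rewrite (@sum_subsets n (S :\ i :\ z) (fun t => ((t`! * (k.+2 - t - 1)`!)%N%:R / (k.+2`!)%:R) * dlt h (t + 0) 1)).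
rewrite (@sum_subsets n (S :\ i :\ z) (fun t => ((t.+1`! * (k.+2 - t.+1 - 1)`!)%N%:R / (k.+2`!)%:R) * dlt h (t + a) 1)).
rewrite cA'.
rewrite (eq_bigr (fun t : 'I_k.+1 => ((k.+1 - t)%:R / (k.+1 * k.+2)%:R) * (if t == (h - 0 - 1)%N :> nat then 1 else 0))); last first.
  move=> t _; rewrite mulrA fact_weight2 ?dlt_pt //; [lia | by rewrite -ltnS].
rewrite [X in _ + X](eq_bigr (fun t : 'I_k.+1 => ((t.+1)%:R / (k.+1 * k.+2)%:R) * (if t == (h - a - 1)%N :> nat then 1 else 0))); last first.
  move=> t _; rewrite mulrA fact_weight3 ?dlt_pt //; by rewrite -ltnS.
rewrite (sum_pt (fun t => (k.+1 - t)%:R / (k.+1 * k.+2)%:R)).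
rewrite (sum_pt (fun t => (t.+1)%:R / (k.+1 * k.+2)%:R)).
rewrite /num.
have -> : (h - 0 - 1 < k.+1)%N = (h <= k.+1)%N by lia.
have -> : (h - a - 1 < k.+1)%N = (h - a <= k.+1)%N by lia.
case: (leqP h k.+1) => h1; case: (leqP (h - a) k.+1) => h2.
- rewrite -mulrDl -natrD; congr (_%:R / _); lia.
- rewrite addr0; congr (_%:R / _); lia.
- rewrite add0r; congr (_%:R / _); lia.
- by rewrite addr0 mul0r.
Qed.

End S1.

Lemma ivt (P : nat -> bool) lo hi : (lo <= hi)%N -> P lo -> ~~ P hi ->
  exists k, [/\ (lo <= k)%N, (k < hi)%N, P k & ~~ P k.+1].
Proof.
elim: hi => [|hi IH] lohi Plo Phi.
  by move: lohi; rewrite leqn0 => /eqP E; move: Phi; rewrite -E Plo.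
case: (leqP lo hi) => lh.
  case Ph: (P hi).
    by exists hi; split => //; lia.
  have [k [? ? ? ?]] := IH lh Plo (negbT Ph).
  by exists k; split => //; lia.
have E : lo = hi.+1 by lia.
by move: Phi; rewrite -E Plo.
Qed.

Definition Pk (h a k : nat) : bool := (k * k.+1 <= 2 * h * num h a k)%N.

Lemma choose_k h a : (2 <= a)%N -> (a <= h - 1)%N ->
  exists k, [/\ (h - a <= k)%N, (k < 2 * h)%N, Pk h a k & ~~ Pk h a k.+1].
Proof.
move=> a2 ah.
have [||| k [K1 K2 K3 K4]] := @ivt (Pk h a) (h - a) (2 * h).
- lia.
- rewrite /Pk /num; case: (leqP h (h - a)) => H1; [lia|]; rewrite leqnn; nia.
- rewrite /Pk /num; case: (leqP h (2 * h)) => H1; [|lia].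
  case: (leqP (h - a) (2 * h)) => H2; [|lia]. nia.
by exists k.
Qed.

Lemma choose_q_aux d N : (2 <= d)%N -> (d * (d - 1) <= N)%N ->
  exists q, [/\ (1 <= q)%N, (d * q <= N)%N & (N <= d.+1 * q)%N].
Proof.
move=> d1 hN.
exists (N %/ d).
have E := divn_eq N d.
have R := ltn_pmod N (ltnW d1).
set q := N %/ d in E *.
set r := N %% d in E R.
have q2 : (d - 1 <= q)%N.
  case: (leqP (d - 1) q) => // H.
  have H' : (q * d <= (d - 2) * d)%N by apply: leq_mul; lia.
  have H2 : ((d - 2) * d + d = d * (d - 1))%N.
    by rewrite -[X in _ + X](mul1n d) -mulnDl mulnC; congr (_ * _); lia.
  rewrite mulnC in E; lia.
split; [lia | rewrite E mulnC; lia | rewrite E mulSn mulnC; lia].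
Qed.

Lemma card_ord_pred n (Q : pred nat) :
  #|[set y : 'I_n | Q y]| = (\sum_(0 <= p < n) (Q p : nat))%N.
Proof.
rewrite -sum1_card big_mkcond /= big_mkord; apply: eq_bigr => y _.
by rewrite inE; case: (Q y).
Qed.

Lemma sum_mono (f : nat -> nat) M M' : (M <= M')%N ->
  (\sum_(0 <= p < M) f p <= \sum_(0 <= p < M') f p)%N.
Proof.
move=> MM; rewrite (big_cat_nat (leq0n M) MM) /=; exact: leq_addr.
Qed.

Lemma cnt_block q c j : (0 < q)%N -> (j < q)%N ->
  (\sum_(0 <= p < c * q) ((p %% q == j) : nat))%N = c.
Proof.
move=> q0 jq; elim: c => [|c IH]; first by rewrite mul0n big_geq.
rewrite mulSn addnC (big_cat_nat (leq0n (c * q)) (leq_addr _ _)) /= IH.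
rewrite -[X in \sum_(X <= _ < _) _](add0n (c * q)) big_addn.
have -> : (c * q + q - c * q = q)%N by lia.
rewrite (@eq_big_nat _ 0%N addn 0 q _ (fun p => if p == j then 1 else 0)%N); last first.
  move=> p /andP[_ pq]; rewrite addnC modnMDl modn_small //; by case: (p == j).
rewrite big_mkord -big_mkcond /= (big_ord1_eq _ (fun _ => 1%N)) jq; lia.
Qed.

Lemma card_C0 n k : (k < n)%N -> #|[set y : 'I_n | (val y <= k)%N]| = k.+1.
Proof.
move=> kn.
rewrite (card_ord_pred n (fun p => (p <= k)%N)).
rewrite (big_cat_nat (leq0n k.+1) kn) /=.
rewrite (@eq_big_nat _ 0%N addn 0 k.+1 _ (fun _ => 1%N)); last first.
  by move=> p /andP[_ pk]; rewrite -ltnS pk.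
rewrite (@eq_big_nat _ 0%N addn k.+1 n _ (fun _ => 0%N)); last first.
  by move=> p /andP[kp _]; rewrite leqNgt kp.
by rewrite !sum_nat_const_nat; lia.
Qed.

Lemma card_Cj n k q j : (k < n)%N ->
  #|[set y : 'I_n | (k < val y)%N && ((val y - k.+1) %% q == j)]| =
  (\sum_(0 <= p < n - k.+1) ((p %% q == j) : nat))%N.
Proof.
move=> kn.
rewrite (card_ord_pred n (fun p => (k < p)%N && ((p - k.+1) %% q == j))).
rewrite (big_cat_nat (leq0n k.+1) kn) /=.
rewrite (@eq_big_nat _ 0%N addn 0 k.+1 _ (fun _ => 0%N)); last first.
  by move=> p /andP[_ pk]; rewrite ltnNge -ltnS pk.
rewrite sum_nat_const_nat muln0 add0n.
rewrite -[X in \sum_(X <= _ < _) _](add0n k.+1) big_addn.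
apply: eq_big_nat => p _.
by rewrite addnK (_ : (k < p + k.+1)%N = true) //; lia.
Qed.

Section S2.
Local Open Scope ring_scope.

Lemma frac_le (p1 q1 p2 q2 : nat) : (0 < q1)%N -> (0 < q2)%N ->
  (p1 * q2 <= p2 * q1)%N -> (p1%:R / q1%:R <= p2%:R / q2%:R :> rat).
Proof.
move=> q10 q20 H.
rewrite ler_pdivrMr ?ltr0n // mulrAC ler_pdivlMr ?ltr0n // -!natrM ler_nat.
by [].
Qed.

Lemma pay_small n h a (S : {set 'I_n}) i : (0 < h)%N -> i \in S ->
  (forall j, j \in S -> val j != 0%N) ->
  shapley h a i S = (if (h <= #|S|)%N then 1 else 0) / #|S|%:R.
Proof.
move=> h0 iS sm.
rewrite shapley_smallA //; last by move=> j /setD1P [_ /sm].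
have -> : stake a i = 1%N by rewrite /stake (negbTE (sm i iS)).
rewrite sum_dlt1 //.
by have -> : #|S :\ i|.+1 = #|S| by rewrite (cardsD1 i S) iS.
Qed.

Lemma pay_L n h a (S : {set 'I_n}) z : (a <= h)%N -> val z = 0%N -> z \in S ->
  (forall j, j \in S -> j != z -> val j != 0%N) ->
  shapley h a z S = (minn #|S| h - (h - a))%:R / #|S|%:R.
Proof.
move=> ah z0 zS sm.
rewrite shapley_smallA //; last by move=> j /setD1P [jz /sm]; apply.
have -> : stake a z = a by rewrite /stake z0.
rewrite sum_dlta //.
by have -> : #|S :\ z|.+1 = #|S| by rewrite (cardsD1 z S) zS.
Qed.

Lemma wt_total n a : (0 < n)%N -> wt a [set: 'I_n] = (a + (n - 1))%N.
Proof.
case: n => // n _.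
rewrite /wt (eq_bigl xpredT); last by move=> i; rewrite inE.
rewrite big_ord_recl /= /stake /=.
rewrite (eq_bigr (fun _ => 1%N)) ?sum_nat_const ?card_ord; last by [].
by rewrite muln1 subn1.
Qed.

Lemma W_bound n h a P : (0 < n)%N -> partition P [set: 'I_n] ->
  (W h a P * h <= a + (n - 1))%N.
Proof.
move=> n0 /and3P[/eqP cov triv _].
rewrite /W -sum_nat_const.
apply: (@leq_trans (\sum_(S in [set S in P | (h <= wt a S)%N]) wt a S)).
  by apply: leq_sum => S; rewrite inE => /andP[_ ->].
apply: (@leq_trans (\sum_(S in P) wt a S)).
  rewrite [X in (_ <= X)%N](bigID (fun S => (h <= wt a S)%N)) /=.
  rewrite (eq_bigl (fun S => (S \in P) && (h <= wt a S)%N)); first exact: leq_addr.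
  by move=> S; rewrite inE.
rewrite -wt_total // -cov /wt (big_trivIset _ triv).
by [].
Qed.

Lemma arithA1 h a k y : (2 <= a)%N -> (a <= h - 1)%N -> (h - a <= k)%N ->
  (k < 2 * h)%N -> ~~ Pk h a k.+1 -> (2 * h <= y)%N ->
  ((minn y h - (h - a)) * k.+1 <= (minn k.+1 h - (h - a)) * y)%N.
Proof.
move=> a2 ah bk k2 nP hy.
have -> : (minn y h - (h - a) = a)%N by lia.
case: (leqP h k.+1) => hk.
  have -> : (h - (h - a) = a)%N by lia.
  apply: leq_mul => //; lia.
move: nP; rewrite /Pk /num.
rewrite (_ : (h <= k.+1)%N = false); last by lia.
rewrite (_ : (h - a <= k.+1)%N = true); last by lia.
rewrite add0n -ltnNge => nP.
apply: (@leq_trans ((k.+1 - (h - a)) * (2 * h))); last by apply: leq_mul.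
nia.
Qed.

Lemma arithB h a k y : Pk h a k -> (2 * h <= y)%N ->
  (1 * (k * k.+1) <= num h a k * y)%N.
Proof.
rewrite /Pk mul1n => P hy.
apply: (leq_trans P); rewrite mulnC; apply: leq_mul => //.
Qed.

Lemma arithC h a k x : ~~ Pk h a k.+1 -> (x <= 2 * h)%N ->
  (num h a k.+1 * x <= 1 * (k.+1 * k.+2))%N.
Proof.
rewrite /Pk mul1n -ltnNge => P hx.
apply: ltnW; apply: leq_ltn_trans P; rewrite mulnC; apply: leq_mul => //.
Qed.

Lemma ifR (c : bool) : (if c then (1 : rat) else 0) = (c : nat)%:R.
Proof. by case: c. Qed.

End S2.

Theorem theorem3p10 (n h a : nat) :
  (2 <= a)%N -> (a <= h - 1)%N -> ((2 * h - 1) ^ 2 + h <= n)%N ->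
  exists P : {set {set 'I_n}},
    NE h a P /\ ((OPT n h a)%:R / (W h a P)%:R <= 2 :> rat)%R.
Proof.
move=> a2 ah; rewrite expnS expn1 => hn.
have h3 : (3 <= h)%N by lia.
have n0 : (0 < n)%N by nia.
have [k [bk k2 Pk1 Pk2]] := @choose_k h a a2 ah.
have kn : (k < n)%N by nia.
set N := (n - k.+1)%N.
have HN : ((2 * h - 1) * (2 * h - 1 - 1) <= N)%N by rewrite /N; nia.
have [q [q1 qN Nq]] := @choose_q_aux (2 * h - 1) N ltac:(lia) HN.
have {}Nq : (N <= 2 * h * q)%N by rewrite (_ : 2 * h = (2 * h - 1).+1)%N //; lia.
pose z : 'I_n := Ordinal n0.
pose lab (y : 'I_n) := if (val y <= k)%N then 0%N else ((val y - k.+1) %% q).+1.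
pose P := preim_partition lab [set: 'I_n].
have partP : partition P [set: 'I_n] := preim_partitionP lab _.
have memP : forall S, S \in P -> exists x, S = [set y | lab y == lab x].
  move=> S /imsetP [x _ ->]; exists x; apply/setP => y; rewrite !inE eq_sym.
  by [].
have small : forall j : 'I_n, j != z -> val j != 0%N.
  move=> j; apply: contra => /eqP j0; apply/eqP/val_inj => /=; by rewrite j0.
have C0E : [set y | lab y == 0%N] = [set y : 'I_n | (val y <= k)%N].
  by apply/setP => y; rewrite !inE /lab; case: ifP.
have CjE : forall j, [set y | lab y == j.+1] =
    [set y : 'I_n | (k < val y)%N && ((val y - k.+1) %% q == j)].
  move=> j; apply/setP => y; rewrite !inE /lab; case: leqP => //=.
have qle : (q <= N)%N by nia.
have pools : forall S, S \in P ->
    (z \in S /\ #|S| = k.+1) \/ (z \notin S /\ (2 * h - 1 <= #|S| <= 2 * h)%N).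
  move=> S /memP [x ->].
  case lx: (lab x) => [|j].
    by left; rewrite C0E inE /= card_C0.
  have jq : (j < q)%N.
    move: lx; rewrite /lab; case: ifP => // _ [<-]; apply: ltn_pmod; lia.
  right; rewrite CjE inE /= card_Cj //; split => //.
  apply/andP; split.
    by rewrite -{1}(@cnt_block q (2 * h - 1) j) //; apply: sum_mono.
  by rewrite -{1}(@cnt_block q (2 * h) j) //; apply: sum_mono.
have z0 : val z = 0%N by [].
have stz : stake a z = a by rewrite /stake z0.
have win : forall S, S \in P -> (h <= wt a S)%N.
  move=> S /pools [[zS cS] | [zS /andP[c1 c2]]].
    rewrite /wt (big_setD1 z zS) /= -/(wt a (S :\ z)) stz wt_small.
      move: cS; rewrite (cardsD1 z S) zS add1n => -[->]; lia.
    by move=> j /setD1P[jz _]; apply: small.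
  rewrite wt_small; last by move=> j jS; apply: small; apply: contraNneq zS => <-.
  by apply: leq_trans c1; lia.
have WP : (q.+1 <= W h a P)%N.
  have -> : W h a P = #|P|.
    rewrite /W; apply: eq_card => S; rewrite inE.
    by case SP: (S \in P) => //=; rewrite win.
  have rep : forall j : 'I_q.+1, exists y, lab y = j.
    case=> [[|t] /= tq].
      by exists z; rewrite /lab /=.
    have lt : (k.+1 + t < n)%N by lia.
    exists (Ordinal lt); rewrite /lab /=.
    rewrite (_ : (k.+1 + t <= k)%N = false); last by lia.
    by rewrite addKn modn_small.
  pose f (j : 'I_q.+1) := [set y | lab y == j].
  have finj : injective f.
    move=> j1 j2 E; have [y ly] := rep j1.
    have : y \in f j1 by rewrite inE ly.
    by rewrite E inE ly => /eqP /val_inj.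
  rewrite -(card_ord q.+1) -(card_imset predT finj).
  apply: subset_leq_card; apply/subsetP => S /imsetP [j _ ->].
  have [y ly] := rep j.
  apply/imsetP; exists y; first by rewrite inE.
  by apply/setP => x; rewrite !inE ly eq_sym.
have OPTb : (OPT n h a <= 2 * q.+1)%N.
  apply/bigmax_leqP => P' partP'.
  have H := @W_bound n h a P' n0 partP'.
  have H2 : (W h a P' * h <= 2 * h * q + 3 * h - 2)%N by rewrite /N in Nq; lia.
  case: (leqP (W h a P') (2 * q.+1)) => // H3.
  have H4 : ((2 * q + 3) * h <= W h a P' * h)%N by apply: leq_mul; lia.
  nia.
exists P; split; last first.
  have W0 : (0 < (W h a P)%:R :> rat)%R by rewrite ltr0n; lia.
  rewrite ler_pdivrMr // -natrM ler_nat; lia.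
split => //.
have [_ triv _] := and3P partP.
have k0 : (0 < k)%N by clear -a2 ah bk h3; lia.
have k1 : k = k.-1.+1 by clear -a2 ah bk h3; lia.
have hh : 2 * h = (2 * h - 1).+1 by clear -a2 ah bk h3; lia.
have hh1 : (h <= 1)%N = false by clear -a2 ah bk h3; lia.
have hm : forall x, (2 * h - 1 <= x)%N -> (h <= x.+1)%N by clear -h3; move=> x; lia.
have alz : ((minn 1 h - (h - a)) * k.+1 <= (minn k.+1 h - (h - a)) * 1)%N by clear -a2 ah bk h3; lia.
have ah' : (a < h)%N by clear -ah h3; lia.
have h0 : (0 < h)%N by clear -h3; lia.
move=> i S SP iS.
have notinx : forall x (S' : {set 'I_n}), x \in S -> S' \in P -> S' != S -> x \notin S'.
  move=> x S' xS S'P S'S; apply/negP => iS'; move/negP: S'S; apply.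
  by rewrite -(def_pblock triv SP xS) (def_pblock triv S'P iS').
have notin : forall S' : {set 'I_n}, S' \in P -> S' != S -> i \notin S'.
  by move=> S'; apply: notinx.
have cardU : forall S' : {set 'I_n}, i \notin S' -> #|S' :|: [set i]| = #|S'|.+1.
  by move=> S' iS'; rewrite setUC cardsU1 iS'.
have smallU : forall S' : {set 'I_n}, z \notin S' -> i != z ->
    forall j, j \in S' :|: [set i] -> val j != 0%N.
  move=> S' zS' iz j; rewrite !inE => /orP[jS'|/eqP ->]; apply: small => //.
  by apply: contraNneq zS' => <-.
have smallz : forall (T : {set 'I_n}) j, j \in T -> j != z -> val j != 0%N.
  by move=> T j _; apply: small.
have [[zS cS] | [zS /andP[c1 c2]]] := pools S SP.
- case: (eqVneq i z) => [eiz | iz].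
  + subst i.
    rewrite (@pay_L n h a S z (ltnW ah') z0 zS (smallz S)) cS.
    split.
    * move=> S' S'P S'S; have iS' := notin S' S'P S'S.
      have [[zS' _] | [zS' /andP[d1 d2]]] := pools S' S'P.
        by move: iS'; rewrite zS'.
      have zU : z \in S' :|: [set z] by rewrite !inE eqxx orbT.
      rewrite (@pay_L n h a (S' :|: [set z]) z (ltnW ah') z0 zU (smallz _)) cardU //.
      apply: frac_le => //; apply: arithA1 => //.
      by rewrite hh ltnS.
    * have zU : z \in [set z] by rewrite !inE.
      rewrite (@pay_L n h a [set z] z (ltnW ah') z0 zU (smallz _)) cards1.
      by apply: frac_le.
  + rewrite (@shapley_Lpool n h a S i z k.-1 ah' z0 zS iS iz (smallz S)); last by rewrite cS -k1.
    rewrite -k1.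
    split.
    * move=> S' S'P S'S; have iS' := notin S' S'P S'S.
      have [[zS' _] | [zS' /andP[d1 d2]]] := pools S' S'P.
        by move: (notinx z S' zS S'P S'S); rewrite zS'.
      have iU : i \in S' :|: [set i] by rewrite !inE eqxx orbT.
      rewrite (@pay_small n h a (S' :|: [set i]) i h0 iU (smallU S' zS' iz)) cardU //.
      rewrite (_ : (h <= #|S'|.+1)%N = true); last by apply: hm.
      apply: (@frac_le 1%N) => //; first by rewrite muln_gt0 k0.
      apply: arithB => //.
      by rewrite hh ltnS.
    * have iU : i \in [set i] by rewrite !inE.
      have sm1 : forall j, j \in [set i] -> val j != 0%N.
        by move=> j; rewrite inE => /eqP ->; apply: small.
      rewrite (@pay_small n h a [set i] i h0 iU sm1) cards1.
      rewrite hh1.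
      by apply: (@frac_le 0%N) => //; rewrite muln_gt0 k0.
- have iz : i != z by apply: contraNneq zS => <-.
  have smS : forall j, j \in S -> val j != 0%N.
    by move=> j jS; apply: small; apply: contraNneq zS => <-.
  have hS : (h <= #|S|)%N by apply: leq_trans c1; clear -h3; lia.
  have S0 : (0 < #|S|)%N by apply: leq_trans hS.
  rewrite (@pay_small n h a S i h0 iS smS) hS.
  split.
  + move=> S' S'P S'S; have iS' := notin S' S'P S'S.
    have [[zS' cS'] | [zS' /andP[d1 d2]]] := pools S' S'P.
      have iU : i \in S' :|: [set i] by rewrite !inE eqxx orbT.
      have zU : z \in S' :|: [set i] by rewrite !inE zS'.
      rewrite (@shapley_Lpool n h a (S' :|: [set i]) i z k ah' z0 zU iU iz (smallz _)); last by rewrite cardU // cS'.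
      apply: (@frac_le _ _ 1%N) => //; apply: arithC => //.
    have iU : i \in S' :|: [set i] by rewrite !inE eqxx orbT.
    rewrite (@pay_small n h a (S' :|: [set i]) i h0 iU (smallU S' zS' iz)) cardU //.
    rewrite (_ : (h <= #|S'|.+1)%N = true); last by apply: hm.
    apply: (@frac_le 1%N _ 1%N) => //.
    rewrite !mul1n; apply: (leq_trans c2); by rewrite hh ltnS.
  + have iU : i \in [set i] by rewrite !inE.
    have sm1 : forall j, j \in [set i] -> val j != 0%N.
      by move=> j; rewrite inE => /eqP ->; apply: small.
    rewrite (@pay_small n h a [set i] i h0 iU sm1) cards1 hh1.
    by apply: (@frac_le 0%N _ 1%N).
Qed.
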